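(* Let $\mathcal{X}$ and $\mathcal{Y}$ be finite sets, $g:\mathcal{X}\times\mathcal{Y}\to\mathbb{R}_{>0}$ a strictly positive function, and $h:\mathcal{Y}\to\mathbb{R}_{\ge0}$ a non-negative function. Then, writing $X\sim p$ and $Y\sim q$ in all expectations, \[ \max_{q\in\Delta(\mathcal{Y})}\min_{x\in\mathcal{X}}\mathbb{E}\frac{g(x,Y)}{h(Y)} =\min_{p\in\Delta(\mathcal{X})}\max_{y\in\mathcal{Y}}\frac{\mathbb{E}\,g(X,y)}{h(y)} =\max_{q\in\Delta(\mathcal{Y})}\min_{p\in\Delta(\mathcal{X})}\frac{\mathbb{E}\,g(X,Y)}{\mathbb{E}\,h(Y)} =\min_{p\in\Delta(\mathcal{X})}\max_{q\in\Delta(\mathcal{Y})}\frac{\mathbb{E}\,g(X,Y)}{\mathbb{E}\,h(Y)}. \]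
   Context: For a finite set $U$, $\Delta(U)$ denotes the set of all probability distributions on $U$; $X$ and $Y$ are independent. *)

(* Defs.v *)
From HB Require Import structures.
From mathcomp Require Import all_boot all_order all_algebra.
From mathcomp Require Import boolp classical_sets reals constructive_ereal ereal.
Set Implicit Arguments. Unset Strict Implicit. Unset Printing Implicit Defensive.
Import Order.TTheory GRing.Theory Num.Theory.
Local Open Scope classical_set_scope.
Local Open Scope ring_scope.

Definition dist (R : realType) (U : finType) : set (U -> R) :=
  [set p | (forall u, 0 <= p u) /\ \sum_(u : U) p u = 1].

(* a / b in the extended reals, with the convention a / 0 = +oo
   (only used with a > 0, b >= 0). *)
Definition eratio (R : realType) (a b : R) : \bar R :=
  if b == 0 then +oo%E else (a / b)%:E.

Local Open Scope ereal_scope.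

Definition is_min (R : realType) (A : Type) (S : set A) (F : A -> \bar R) (v : \bar R) :=
  (exists2 a, S a & F a = v) /\ (forall a, S a -> v <= F a).
Definition is_max (R : realType) (A : Type) (S : set A) (F : A -> \bar R) (v : \bar R) :=
  (exists2 a, S a & F a = v) /\ (forall a, S a -> F a <= v).

(* max_{a in S} min_{b in T} F a b = v  (all max/min attained) *)
Definition maxmin (R : realType) (A B : Type) (S : set A) (T : set B)
  (F : A -> B -> \bar R) (v : \bar R) :=
  (forall a, S a -> is_min T (F a) (ereal_inf (F a @` T))) /\
  is_max S (fun a => ereal_inf (F a @` T)) v.

(* min_{a in S} max_{b in T} F a b = v  (all max/min attained) *)
Definition minmax (R : realType) (A B : Type) (S : set A) (T : set B)
  (F : A -> B -> \bar R) (v : \bar R) :=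
  (forall a, S a -> is_max T (F a) (ereal_sup (F a @` T))) /\
  is_min S (fun a => ereal_sup (F a @` T)) v.

(* Main.v *)
Require Import Defs.
From HB Require Import structures.
From mathcomp Require Import all_boot all_order all_algebra.
From mathcomp Require Import boolp classical_sets reals constructive_ereal ereal.
From mathcomp Require Import lra.
Import Order.TTheory GRing.Theory Num.Theory.
Set Implicit Arguments. Unset Strict Implicit. Unset Printing Implicit Defensive.
Local Open Scope classical_set_scope.
Local Open Scope ring_scope.
Lemma sum_delta (R : realType) (Y : finType) (y : Y) (f : Y -> R) :
  \sum_z ((z == y)%:R * f z) = f y.
Proof.
rewrite (bigD1 y) //= eqxx mul1r big1 ?addr0 // => z /negbTE ->; by rewrite mul0r.
Qed.

Lemma sum_delta' (R : realType) (Y : finType) (y : Y) (f : Y -> R) :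
  \sum_z (f z * (z == y)%:R) = f y.
Proof. rewrite -[RHS](sum_delta y); apply: eq_bigr => z _; exact: mulrC. Qed.

Definition Lf (R : realType) (X Y : finType) (M : X -> Y -> R) (x0 : X)
  (k : (Y + Y * Y)%type) (z : Y) : R :=
  match k with
  | inl y => ((0 <= M x0 y)%R)%:R * (z == y)%:R
  | inr (y, y') => ((0 < M x0 y) && (M x0 y' < 0))%R%:R *
        (M x0 y * (z == y')%:R - M x0 y' * (z == y)%:R)
  end.

Definition Mf (R : realType) (X Y : finType) (M : X -> Y -> R) (x0 : X)
  (x : X) (k : (Y + Y * Y)%type) : R := \sum_z Lf M x0 k z * M x z.

Lemma Lf_ge0 (R : realType) (X Y : finType) (M : X -> Y -> R) x0 k z :
  0 <= Lf M x0 k z.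
Proof.
case: k => [y|[y y']] /=.
  by apply: mulr_ge0; rewrite ler0n.
case: (boolP ((0 < M x0 y) && (M x0 y' < 0))) => [/andP[H1 H2]|_]; last by rewrite mul0r.
rewrite mul1r subr_ge0; apply: (@le_trans _ _ 0).
  by apply: mulr_le0_ge0; [exact: ltW | rewrite ler0n].
by apply: mulr_ge0; [exact: ltW | rewrite ler0n].
Qed.

Lemma Mf_x0 (R : realType) (X Y : finType) (M : X -> Y -> R) x0 k :
  0 <= Mf M x0 x0 k.
Proof.
rewrite /Mf; case: k => [y|[y y']] /=.
  under eq_bigr do rewrite -mulrA.
  rewrite -mulr_sumr sum_delta; case: (boolP (0 <= M x0 y)) => H; last by rewrite mul0r.
  by rewrite mul1r.
under eq_bigr do rewrite -mulrA.
rewrite -mulr_sumr; case: ((0 < M x0 y) && (M x0 y' < 0)); last by rewrite mul0r.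
rewrite mul1r.
under eq_bigr do rewrite mulrBl -!mulrA.
by rewrite sumrB -!mulr_sumr !sum_delta mulrC subrr.
Qed.

Lemma Lf_sum (R : realType) (X Y : finType) (M : X -> Y -> R) x0 (s : Y -> R) y :
  \sum_z Lf M x0 (inl y) z * s z = ((0 <= M x0 y)%R)%:R * s y.
Proof. under eq_bigr do rewrite /= -mulrA. by rewrite -mulr_sumr sum_delta. Qed.

Lemma Lf_sum2 (R : realType) (X Y : finType) (M : X -> Y -> R) x0 (s : Y -> R) y y' :
  (0 < M x0 y) -> (M x0 y' < 0) ->
  \sum_z Lf M x0 (inr (y, y')) z * s z = M x0 y * s y' - M x0 y' * s y.
Proof.
move=> H1 H2; rewrite /= H1 H2 /=.
under eq_bigr do rewrite mul1r mulrBl -!mulrA.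
by rewrite sumrB -!mulr_sumr !sum_delta.
Qed.

Lemma exch (R : realType) (A B : finType) (a : A -> R) (L : A -> B -> R) (m : B -> R) :
  \sum_b (\sum_k a k * L k b) * m b = \sum_k a k * \sum_b L k b * m b.
Proof.
under eq_bigr do rewrite mulr_suml.
rewrite exchange_big /=; apply: eq_bigr => k _.
rewrite mulr_sumr; apply: eq_bigr => b _; by rewrite mulrA.
Qed.

Lemma sum_delta1 (R : realType) (Y : finType) (y : Y) :
  \sum_z ((z == y)%:R : R) = 1.
Proof.
rewrite (bigD1 y) //= eqxx big1 ?addr0 // => z /negbTE ->; by [].
Qed.

Lemma bigmax_ge0 (R : realType) (I : finType) (P : pred I) (F : I -> R) :
  0 <= \big[Num.max/0]_(i | P i) F i.
Proof. apply: (big_rec (fun v => 0 <= v)) => // i v _ Hv; by rewrite le_max Hv orbT. Qed.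

Lemma le_bigmax' (R : realType) (I : finType) (P : pred I) (F : I -> R) i :
  P i -> F i <= \big[Num.max/0]_(j | P j) F j.
Proof. move=> Pi; by rewrite (bigD1 i) //= le_max lexx. Qed.

Lemma bigmax_le' (R : realType) (I : finType) (P : pred I) (F : I -> R) c :
  0 <= c -> (forall i, P i -> F i <= c) -> \big[Num.max/0]_(i | P i) F i <= c.
Proof.
move=> c0 H; apply: (big_ind (fun v => v <= c)) => // a b Ha Hb; by rewrite ge_max Ha.
Qed.

Lemma sum_ge_term (R : realType) (I : finType) (P : pred I) (F : I -> R) i :
  (forall j, P j -> 0 <= F j) -> P i -> F i <= \sum_(j | P j) F j.
Proof.
move=> H Pi; rewrite (bigD1 i) //= lerDl; apply: sumr_ge0 => j /andP[Pj _]; exact: H.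
Qed.

Lemma ville (R : realType) (X : finType) (n : nat) :
  forall (Y : finType) (S : {set X}) (M : X -> Y -> R), #|S| = n ->
  (exists q : Y -> R, (forall y, 0 <= q y) /\
       forall x, x \in S -> 0 < \sum_y q y * M x y) \/
  (exists p : X -> R, (forall x, 0 <= p x) /\ (forall x, x \notin S -> p x = 0) /\
       0 < \sum_x p x /\ forall y, \sum_x p x * M x y <= 0).
Proof.
elim: n => [|n IH] Y S M cS.
  left; exists (fun _ => 0); split => // x; by rewrite (cards0_eq cS) inE.
have [x0 x0S] : exists x0, x0 \in S by apply/card_gt0P; rewrite cS.
have cS' : #|S :\ x0| = n by move: cS; rewrite (cardsD1 x0) x0S add1n => -[].
case: (pselect (exists y, 0 < M x0 y)) => [[y1 Hy1]|Hn]; last first.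
  right; exists (fun x => (x == x0)%:R); split; first by move=> x; rewrite ler0n.
  split; first by move=> x xS; case: eqP => // ex; rewrite ex x0S in xS.
  split; first by rewrite sum_delta1 ltr01.
  move=> y; rewrite sum_delta; rewrite leNgt; apply/negP => H; apply: Hn; by exists y.
case: (IH _ (S :\ x0) (Mf M x0) cS') => [[q' [q'0 Hq']]|[p' [p'0 [p'S [p'pos Hp']]]]].
-
  pose q0 z := \sum_k q' k * Lf M x0 k z.
  have q00 z : 0 <= q0 z by apply: sumr_ge0 => k _; apply: mulr_ge0 => //; exact: Lf_ge0.
  have Eq0 x : \sum_z q0 z * M x z = \sum_k q' k * Mf M x0 x k by rewrite /q0 exch.
  have r0 : 0 <= \sum_z q0 z * M x0 z.
    by rewrite Eq0; apply: sumr_ge0 => k _; apply: mulr_ge0 => //; exact: Mf_x0.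
  pose s x := \sum_z q0 z * M x z.
  pose lam := 1 + \sum_(x in S :\ x0) `|M x y1| / s x.
  have s0 x : x \in S :\ x0 -> 0 < s x by move=> xS; rewrite /s Eq0; exact: Hq'.
  have lam1 : 1 <= lam.
    rewrite lerDl; apply: sumr_ge0 => x xS; apply: divr_ge0 => //; exact: ltW (s0 _ xS).
  left; exists (fun z => lam * q0 z + (z == y1)%:R); split.
    move=> z; apply: addr_ge0; [apply: mulr_ge0 => //; lra | by rewrite ler0n].
  move=> x xS.
  have -> : \sum_y (lam * q0 y + (y == y1)%:R) * M x y = lam * s x + M x y1.
    under eq_bigr do rewrite mulrDl -mulrA.
    by rewrite big_split /= -mulr_sumr sum_delta.
  case: (eqVneq x x0) => [->|nx].
    have : 0 <= lam * s x0 by apply: mulr_ge0 => //; lra.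
    lra.
  have xS' : x \in S :\ x0 by rewrite !inE nx.
  have sx := s0 x xS'.
  have Hl : 1 + `|M x y1| / s x <= lam.
    rewrite lerD2l; apply: (sum_ge_term (P := fun x => x \in S :\ x0)) => // j jS.
    apply: divr_ge0 => //; exact: ltW (s0 _ jS).
  have H1 : (1 + `|M x y1| / s x) * s x <= lam * s x by apply: ler_wpM2r => //; exact: ltW.
  have H2 : (1 + `|M x y1| / s x) * s x = s x + `|M x y1|.
    by rewrite mulrDl mul1r divfK // gt_eqF.
  have H3 : 0 <= `|M x y1| + M x y1.
    have := ler_norm (- M x y1); rewrite normrN; lra.
  lra.
-
  pose s y := \sum_x p' x * M x y.
  have Es k : \sum_x p' x * Mf M x0 x k = \sum_z Lf M x0 k z * s z.
    rewrite /Mf /s.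
    under eq_bigr do rewrite mulr_sumr.
    rewrite exchange_big /=; apply: eq_bigr => z _.
    rewrite mulr_sumr; apply: eq_bigr => x _; by rewrite mulrCA.
  have Hnn y : 0 <= M x0 y -> s y <= 0.
    move=> Hy; have := Hp' (inl y); by rewrite Es Lf_sum Hy mul1r.
  have Hpair y y' : 0 < M x0 y -> M x0 y' < 0 -> M x0 y * s y' - M x0 y' * s y <= 0.
    move=> Hy Hy'; have := Hp' (inr (y, y')); by rewrite Es Lf_sum2.
  pose t := \big[Num.max/0]_(y | M x0 y < 0) (s y / - M x0 y).
  have t0 : 0 <= t by exact: bigmax_ge0.
  right; exists (fun x => p' x + t * (x == x0)%:R); split.
    by move=> x; apply: addr_ge0 => //; apply: mulr_ge0 => //; rewrite ler0n.
  split.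
    move=> x xS; rewrite p'S; last by rewrite !inE negb_and xS orbT.
    have nx : x != x0 by apply: contraNneq xS => ->.
    by rewrite (negbTE nx) mulr0 addr0.
  split.
    rewrite big_split /= -mulr_sumr sum_delta1 mulr1.
    by apply: ltr_wpDr.
  move=> y.
  have -> : \sum_x (p' x + t * (x == x0)%:R) * M x y = s y + t * M x0 y.
    under eq_bigr do rewrite mulrDl mulrAC.
    by rewrite big_split /= (sum_delta' x0 (fun x => t * M x y)).
  case: (ltgtP (M x0 y) 0) => Hy.
  + have : s y / - M x0 y <= t by exact: (le_bigmax' (P := fun y => M x0 y < 0)).
    rewrite ler_pdivrMr ?oppr_gt0 //; lra.
  + have sy := Hnn y (ltW Hy).
    have : t <= - s y / M x0 y.
      apply: bigmax_le'; first by apply: divr_ge0 => //; [lra | exact: ltW].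
      move=> y' Hy'; rewrite ler_pdivrMr ?oppr_gt0 // mulrAC ler_pdivlMr //.
      have := Hpair y y' Hy Hy'; lra.
    rewrite ler_pdivlMr //; lra.
  + rewrite Hy mulr0 addr0; apply: Hnn; by rewrite Hy.
Qed.

Lemma fin_lb (R : realType) (I : finType) (F : I -> R) (a : R) :
  (forall i, a < F i) -> exists b, a < b /\ forall i, b <= F i.
Proof.
move=> H; exists (\big[Num.min/(a+1)]_i F i); split.
  by apply: (big_ind (fun v => a < v)) => [|u w Hu Hw|i _]; rewrite ?lt_min ?Hu ?Hw //; lra.
by move=> i; rewrite (bigD1 i) //= ge_min lexx.
Qed.

Lemma fin_ub (R : realType) (I : finType) (F : I -> R) (a : R) :
  (forall i, F i < a) -> exists b, b < a /\ forall i, F i <= b.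
Proof.
move=> H; have [b [H1 H2]] := @fin_lb R I (fun i => - F i) (- a) (fun i => ltac:(rewrite ltrN2; exact: H i)).
exists (- b); split; first by rewrite ltrNl.
by move=> i; rewrite lerNr.
Qed.

Lemma fin_le (R : realType) (I : finType) (F : I -> R) : exists b, forall i, F i <= b.
Proof.
exists (\big[Num.max/0]_i F i) => i; exact: (le_bigmax' (P := predT)).
Qed.

Lemma conv_le (R : realType) (Y : finType) (q : Y -> R) (F : Y -> R) m :
  @dist R Y q -> (forall y, F y <= m) -> \sum_y q y * F y <= m.
Proof.
move=> [q0 q1] H; apply: (@le_trans _ _ (\sum_y q y * m)).
  apply: ler_sum => y _; exact: ler_wpM2l.
by rewrite -mulr_suml q1 mul1r.
Qed.

Lemma conv_ge (R : realType) (Y : finType) (q : Y -> R) (F : Y -> R) m :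
  @dist R Y q -> (forall y, m <= F y) -> m <= \sum_y q y * F y.
Proof.
move=> [q0 q1] H; apply: (@le_trans _ _ (\sum_y q y * m)).
  by rewrite -mulr_suml q1 mul1r.
apply: ler_sum => y _; exact: ler_wpM2l.
Qed.

Lemma pos_mass (R : realType) (Y : finType) (q : Y -> R) (F : Y -> R) :
  (forall y, 0 <= q y) -> 0 < \sum_y q y * F y -> 0 < \sum_y q y.
Proof.
move=> q0 H; rewrite lt_def sumr_ge0 // andbT; apply/eqP => /eqP.
rewrite psumr_eq0 // => /allP Hq.
move: H; rewrite big1 ?ltxx // => y _.
by rewrite (eqP (Hq y (mem_index_enum y) )) mul0r.
Qed.

Lemma norm_dist (R : realType) (Y : finType) (q : Y -> R) :
  (forall y, 0 <= q y) -> 0 < \sum_y q y -> @dist R Y (fun y => q y / \sum_y q y).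
Proof.
move=> q0 Q0; split; first by move=> y; apply: divr_ge0 => //; exact: ltW.
by rewrite -mulr_suml divff // gt_eqF.
Qed.

Lemma norm_sum (R : realType) (Y : finType) (q : Y -> R) (F : Y -> R) c :
  \sum_y (q y / c) * F y = (\sum_y q y * F y) / c.
Proof. rewrite mulr_suml; apply: eq_bigr => y _; by rewrite mulrAC. Qed.

Lemma sum_sub (R : realType) (Y : finType) (q : Y -> R) (F : Y -> R) c :
  \sum_y q y * (F y - c) = \sum_y q y * F y - c * \sum_y q y.
Proof.
under eq_bigr do rewrite mulrBr.
by rewrite sumrB mulr_sumr; congr (_ - _); apply: eq_bigr => y _; rewrite mulrC.
Qed.

Lemma sum_subl (R : realType) (Y : finType) (q : Y -> R) (F : Y -> R) c :
  \sum_y q y * (c - F y) = c * \sum_y q y - \sum_y q y * F y.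
Proof.
under eq_bigr do rewrite mulrBr.
by rewrite sumrB mulr_sumr; congr (_ - _); apply: eq_bigr => y _; rewrite mulrC.
Qed.

Lemma exch2 (R : realType) (X Y : finType) (p : X -> R) (q : Y -> R) (G : X -> Y -> R) :
  \sum_x p x * \sum_y q y * G x y = \sum_y q y * \sum_x p x * G x y.
Proof.
under eq_bigr do rewrite mulr_sumr.
rewrite exchange_big /=; apply: eq_bigr => y _.
rewrite mulr_sumr; apply: eq_bigr => x _; by rewrite mulrCA.
Qed.

Lemma saddle (R : realType) (X Y : finType) (G : X -> Y -> R) :
  (0 < #|X|)%N -> (0 < #|Y|)%N ->
  exists p q v, @dist R X p /\ @dist R Y q /\
    (forall x, v <= \sum_y q y * G x y) /\ (forall y, \sum_x p x * G x y <= v).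
Proof.
move=> /card_gt0P [x0 _] /card_gt0P [y0 _].
pose V := [set w : R | exists q, @dist R Y q /\ forall x, w <= \sum_y q y * G x y].
pose dy := fun y : Y => ((y == y0)%:R : R).
have ddy : @dist R Y dy by split; [move=> y; rewrite ler0n | exact: sum_delta1].
have V0 : V !=set0.
  have [b Hb] := fin_le (fun x => - \sum_y dy y * G x y).
  exists (- b), dy; split => // x; rewrite lerNl; exact: Hb.
have [m Hm] := fin_le (fun y => G x0 y).
have Vub : ubound V m.
  move=> w [q [dq Hq]]; apply: le_trans (Hq x0) _; exact: conv_le.
have hs : has_sup V by split => //; exists m.
pose v := sup V.
have supub : forall w, V w -> w <= v by move=> w Vw; exact: sup_upper_bound.
have suple : forall u, ubound V u -> v <= u by move=> u Hu; exact: ge_sup.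
have [q [dq Hq]] : exists q, @dist R Y q /\ forall x, v <= \sum_y q y * G x y.
  case: (ville (S := finset.setTfor Y) (fun y x => v - G x y) erefl)
    => [[p [p0 Hp]]|[q [q0 [_ [Q0 Hq]]]]].
    exfalso.
    have P0 : 0 < \sum_x p x by apply: (pos_mass p0 (Hp y0 (finset.in_setT _))).
    have dp := norm_dist p0 P0.
    have Hlt y : \sum_x (p x / \sum_x p x) * G x y < v.
      rewrite norm_sum ltr_pdivrMr //.
      have := Hp y (finset.in_setT _); rewrite sum_subl; lra.
    have [u [uv Hu]] := fin_ub Hlt.
    have : v <= u.
      apply: suple => w [q' [dq' Hq']].
      apply: (@le_trans _ _ (\sum_x (p x / \sum_x p x) * \sum_y q' y * G x y)).
        exact: conv_ge.
      rewrite exch2; exact: conv_le.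
    lra.
  exists (fun y => q y / \sum_y q y); split; first exact: norm_dist.
  move=> x; rewrite norm_sum ler_pdivlMr //.
  have := Hq x; rewrite sum_subl; lra.
have [p [dp Hp]] : exists p, @dist R X p /\ forall y, \sum_x p x * G x y <= v.
  case: (ville (S := finset.setTfor X) (fun x y => G x y - v) erefl)
    => [[q' [q0 Hq']]|[p [p0 [_ [P0 Hp]]]]].
    exfalso.
    have Q0 : 0 < \sum_y q' y by apply: (pos_mass q0 (Hq' x0 (finset.in_setT _))).
    have dq' := norm_dist q0 Q0.
    have Hlt x : v < \sum_y (q' y / \sum_y q' y) * G x y.
      rewrite norm_sum ltr_pdivlMr //.
      have := Hq' x (finset.in_setT _); rewrite sum_sub; lra.
    have [b [bv Hb]] := fin_lb Hlt.
    have : b <= v by apply: supub; exists (fun y => q' y / \sum_y q' y).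
    lra.
  exists (fun x => p x / \sum_x p x); split; first exact: norm_dist.
  move=> y; rewrite norm_sum ler_pdivrMr //.
  have := Hp y; rewrite sum_sub; lra.
by exists p, q, v.
Qed.

Section EH.
Local Open Scope ereal_scope.

Lemma is_min_inf (R : realType) (A : Type) (S : set A) (F : A -> \bar R) m :
  is_min S F m -> ereal_inf (F @` S) = m.
Proof.
move=> [[a Sa Fa] H]; apply/le_anti/andP; split.
  by rewrite -Fa; apply: ereal_inf_lbound; exists a.
by apply/ereal_infP => _ [b Sb <-]; exact: H.
Qed.

Lemma is_max_sup (R : realType) (A : Type) (S : set A) (F : A -> \bar R) m :
  is_max S F m -> ereal_sup (F @` S) = m.
Proof.
move=> [[a Sa Fa] H]; apply/le_anti/andP; split.
  by apply/ereal_supP => _ [b Sb <-]; exact: H.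
by rewrite -Fa; apply: ereal_sup_ubound; exists a.
Qed.

Lemma maxmin_intro (R : realType) (A B : Type) (S : set A) (T : set B)
  (F : A -> B -> \bar R) v :
  (forall a, S a -> exists m, is_min T (F a) m) ->
  (exists2 a, S a & forall b, T b -> v <= F a b) ->
  (forall a, S a -> exists2 b, T b & F a b <= v) ->
  maxmin S T F v.
Proof.
move=> Hin [a Sa Ha] Hup; split.
  by move=> a' Sa'; have [m Hm] := Hin a' Sa'; rewrite (is_min_inf Hm).
split.
  exists a => //; have [m Hm] := Hin a Sa; rewrite (is_min_inf Hm).
  have [[b Tb Fb] Hmb] := Hm.
  apply/le_anti/andP; split.
    have [b' Tb' Hb'] := Hup a Sa; exact: le_trans (Hmb _ Tb') Hb'.
  by rewrite -Fb; exact: Ha.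
move=> a' Sa'; have [m Hm] := Hin a' Sa'; rewrite (is_min_inf Hm).
have [b' Tb' Hb'] := Hup a' Sa'; exact: le_trans (proj2 Hm _ Tb') Hb'.
Qed.

Lemma minmax_intro (R : realType) (A B : Type) (S : set A) (T : set B)
  (F : A -> B -> \bar R) v :
  (forall a, S a -> exists m, is_max T (F a) m) ->
  (exists2 a, S a & forall b, T b -> F a b <= v) ->
  (forall a, S a -> exists2 b, T b & v <= F a b) ->
  minmax S T F v.
Proof.
move=> Hin [a Sa Ha] Hlo; split.
  by move=> a' Sa'; have [m Hm] := Hin a' Sa'; rewrite (is_max_sup Hm).
split.
  exists a => //; have [m Hm] := Hin a Sa; rewrite (is_max_sup Hm).
  have [[b Tb Fb] Hmb] := Hm.
  apply/le_anti/andP; split.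
    by rewrite -Fb; exact: Ha.
  have [b' Tb' Hb'] := Hlo a Sa; exact: le_trans Hb' (Hmb _ Tb').
move=> a' Sa'; have [m Hm] := Hin a' Sa'; rewrite (is_max_sup Hm).
have [b' Tb' Hb'] := Hlo a' Sa'; exact: le_trans Hb' (proj2 Hm _ Tb').
Qed.

Lemma fin_is_min (R : realType) (I : finType) (i0 : I) (F : I -> \bar R) :
  exists m, is_min setT F m.
Proof.
case: (arg_minP F (P := predT) (i0 := i0) isT) => i _ H.
exists (F i); split; first by exists i.
by move=> j _; exact: H.
Qed.

Lemma fin_is_max (R : realType) (I : finType) (i0 : I) (F : I -> \bar R) :
  exists m, is_max setT F m.
Proof.
case: (arg_maxP F (P := predT) (i0 := i0) isT) => i _ H.
exists (F i); split; first by exists i.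
by move=> j _; exact: H.
Qed.

Lemma esum_delta (R : realType) (Y : finType) (y0 : Y) (e : Y -> \bar R) :
  \sum_y (((y == y0)%:R : R)%:E * e y) = e y0.
Proof.
rewrite (bigD1 y0) //= eqxx mul1e big1 ?adde0 // => y /negbTE ->; by rewrite mul0e.
Qed.

End EH.

Lemma fin_argmin (R : realType) (I : finType) (i0 : I) (F : I -> R) :
  exists i, forall j, F i <= F j.
Proof.
case: (arg_minP F (P := predT) (i0 := i0) isT) => i _ H; exists i => j; exact: H.
Qed.

Lemma fin_argmax (R : realType) (I : finType) (i0 : I) (F : I -> R) :
  exists i, forall j, F j <= F i.
Proof.
case: (arg_maxP F (P := predT) (i0 := i0) isT) => i _ H; exists i => j; exact: H.
Qed.

Lemma eratioE (R : realType) (a b : R) : b != 0 -> eratio a b = (a / b)%:E.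
Proof. by rewrite /eratio => /negbTE ->. Qed.

Lemma eratio0 (R : realType) (a : R) : eratio a 0 = +oo%E.
Proof. by rewrite /eratio eqxx. Qed.

Lemma ddelta (R : realType) (Y : finType) (y0 : Y) :
  @dist R Y (fun y => (y == y0)%:R).
Proof. split; [by move=> y; rewrite ler0n | exact: sum_delta1]. Qed.

Lemma Eexp1 (R : realType) (X Y : finType) (p : X -> R) (q : Y -> R) (g : X -> Y -> R) :
  \sum_x \sum_y p x * q y * g x y = \sum_x p x * \sum_y q y * g x y.
Proof. apply: eq_bigr => x _; rewrite mulr_sumr; apply: eq_bigr => y _; by rewrite mulrA. Qed.

Lemma Eexp2 (R : realType) (X Y : finType) (p : X -> R) (q : Y -> R) (g : X -> Y -> R) :
  \sum_x \sum_y p x * q y * g x y = \sum_y q y * \sum_x p x * g x y.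
Proof. by rewrite Eexp1 exch2. Qed.

Lemma Hge0 (R : realType) (Y : finType) (q : Y -> R) (h : Y -> R) :
  @dist R Y q -> (forall y, 0 <= h y) -> 0 <= \sum_y q y * h y.
Proof. move=> [q0 _] h0; apply: sumr_ge0 => y _; exact: mulr_ge0. Qed.

Lemma Hpos (R : realType) (Y : finType) (q : Y -> R) (h : Y -> R) :
  @dist R Y q -> (forall y, 0 < h y) -> 0 < \sum_y q y * h y.
Proof.
move=> dq h0; rewrite lt_def Hge0 //; last by move=> y; exact: ltW.
rewrite andbT; apply/eqP => /eqP; rewrite psumr_eq0; last first.
  by move=> y _; apply: mulr_ge0; [exact: dq.1 | exact: ltW].
move=> /allP H; have := dq.2; rewrite big1 => [/esym/eqP|y _]; first by rewrite oner_eq0.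
have := H y (mem_index_enum y); rewrite mulf_eq0 (gt_eqF (h0 y)) orbF; exact: eqP.
Qed.

Lemma inner3 (R : realType) (X Y : finType) (x0 : X) (g : X -> Y -> R) (h : Y -> R)
  (q : Y -> R) : @dist R Y q -> (forall y, 0 <= h y) ->
  exists m, is_min (@dist R X)
    (fun p => eratio (\sum_x \sum_y p x * q y * g x y) (\sum_y q y * h y)) m.
Proof.
move=> dq h0; set H := \sum_y q y * h y.
case: (eqVneq H 0) => H0.
  exists +oo%E; split; first by exists (fun x => (x == x0)%:R); [exact: ddelta | rewrite H0 eratio0].
  by move=> p _; rewrite H0 eratio0.
have Hp : 0 < H by rewrite lt_def H0 Hge0.
have [xs Hxs] := fin_argmin x0 (fun x => \sum_y q y * g x y).
exists ((\sum_y q y * g xs y) / H)%:E; split.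
  exists (fun x => (x == xs)%:R); first exact: ddelta.
  by rewrite eratioE // Eexp1 sum_delta.
move=> p dp; rewrite eratioE // Eexp1 lee_fin.
apply: ler_wpM2r; first by rewrite invr_ge0 ltW.
exact: conv_ge.
Qed.

Lemma inner4 (R : realType) (X Y : finType) (y0 : Y) (g : X -> Y -> R) (h : Y -> R)
  (p : X -> R) : (forall y, 0 <= h y) ->
  exists m, is_max (@dist R Y)
    (fun q => eratio (\sum_x \sum_y p x * q y * g x y) (\sum_y q y * h y)) m.
Proof.
move=> h0; case: (pselect (exists y1, h y1 = 0)) => [[y1 Hy1]|Hn].
  exists +oo%E; split; last by move=> q _; exact: leey.
  exists (fun y => (y == y1)%:R); first exact: ddelta.
  by rewrite sum_delta Hy1 eratio0.
have hp y : 0 < h y by rewrite lt_def h0 andbT; apply/eqP => E; apply: Hn; exists y.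
pose r y := (\sum_x p x * g x y) / h y.
have [ys Hys] := fin_argmax y0 r.
exists (r ys)%:E; split.
  exists (fun y => (y == ys)%:R); first exact: ddelta.
  rewrite eratioE ?sum_delta ?gt_eqF // Eexp2 sum_delta //.
move=> q dq; have HP := Hpos dq hp.
rewrite eratioE ?gt_eqF // lee_fin ler_pdivrMr // Eexp2 mulr_sumr.
apply: ler_sum => y _; rewrite mulrCA; apply: ler_wpM2l; first exact: dq.1.
rewrite -ler_pdivrMr //; exact: Hys.
Qed.

Unset Implicit Arguments.

Theorem theorem9 (R : realType) (X Y : finType)
  (hX : (0 < #|X|)%N) (hY : (0 < #|Y|)%N)
  (g : X -> Y -> R) (h : Y -> R)
  (g_pos : forall x y, 0 < g x y) (h_ge0 : forall y, 0 <= h y) :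
  exists v : \bar R,
    (* max_q min_x E[g(x,Y)/h(Y)] *)
    maxmin (@dist R Y) setT
      (fun q x => (\sum_(y : Y) (q y)%:E * eratio (g x y) (h y))%E) v /\
    (* min_p max_y E[g(X,y)] / h(y) *)
    minmax (@dist R X) setT
      (fun p y => eratio (\sum_(x : X) p x * g x y) (h y)) v /\
    (* max_q min_p E[g(X,Y)] / E[h(Y)] *)
    maxmin (@dist R Y) (@dist R X)
      (fun q p => eratio (\sum_(x : X) \sum_(y : Y) p x * q y * g x y)
                         (\sum_(y : Y) q y * h y)) v /\
    (* min_p max_q E[g(X,Y)] / E[h(Y)] *)
    minmax (@dist R X) (@dist R Y)
      (fun p q => eratio (\sum_(x : X) \sum_(y : Y) p x * q y * g x y)
                         (\sum_(y : Y) q y * h y)) v.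
Proof.
have [x0 _] := card_gt0P hX; have [y0 _] := card_gt0P hY.
pose dx := fun x0 : X => (fun x => ((x == x0)%:R : R)).
pose dy := fun y0 : Y => (fun y => ((y == y0)%:R : R)).
case: (pselect (exists y1, h y1 = 0)) => [[y1 Hy1]|Hn].
  exists +oo%E; split; [|split; [|split]].
  - apply: maxmin_intro.
    + move=> q _; exact: fin_is_min x0 _.
    + exists (dy y1); first exact: ddelta.
      by move=> x _; rewrite (esum_delta y1 (fun y => eratio (g x y) (h y))) Hy1 eratio0.
    + by move=> q _; exists x0 => //; exact: leey.
  - apply: minmax_intro.
    + move=> p _; exact: fin_is_max y0 _.
    + by exists (dx x0); [exact: ddelta | move=> y _; exact: leey].
    + by move=> p _; exists y1 => //; rewrite Hy1 eratio0.
  - apply: maxmin_intro.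
    + move=> q dq; exact: inner3.
    + exists (dy y1); first exact: ddelta.
      by move=> p _; rewrite /dy sum_delta Hy1 eratio0.
    + by move=> q _; exists (dx x0); [exact: ddelta | exact: leey].
  - apply: minmax_intro.
    + move=> p _; exact: inner4.
    + by exists (dx x0); [exact: ddelta | move=> q _; exact: leey].
    + move=> p _; exists (dy y1); first exact: ddelta.
      by rewrite /dy sum_delta Hy1 eratio0.
have hp y : 0 < h y by rewrite lt_def h_ge0 andbT; apply/eqP => E; apply: Hn; exists y.
pose G x y := g x y / h y.
have [ps [qs [v [dps [dqs [Hq Hp]]]]]] := saddle G hX hY.
have F1E q x : (\sum_y (q y)%:E * eratio (g x y) (h y))%E = (\sum_y q y * G x y)%:E.
  rewrite -sumEFin; apply: eq_bigr => y _; by rewrite eratioE ?gt_eqF // EFinM.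
have F2E p y : eratio (\sum_x p x * g x y) (h y) = (\sum_x p x * G x y)%:E.
  rewrite eratioE ?gt_eqF // mulr_suml; congr (_%:E); apply: eq_bigr => x _.
  by rewrite /G mulrA.
have K1 q : @dist R Y q ->
    (eratio (\sum_x \sum_y ps x * q y * g x y) (\sum_y q y * h y) <= v%:E)%E.
  move=> dq; have HP := Hpos dq hp.
  rewrite eratioE ?gt_eqF // lee_fin ler_pdivrMr // Eexp2 mulr_sumr.
  apply: ler_sum => y _; rewrite mulrCA; apply: ler_wpM2l; first exact: dq.1.
  rewrite -ler_pdivrMr // mulr_suml; apply: le_trans (Hp y); rewrite le_eqVlt; apply/orP; left; apply/eqP.
  by apply: eq_bigr => x _; rewrite /G mulrA.
pose w y := qs y / h y.
have w0 y : 0 <= w y by apply: divr_ge0; [exact: dqs.1 | exact: ltW].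
have wh : \sum_y w y * h y = 1.
  rewrite -dqs.2; apply: eq_bigr => y _; by rewrite /w divfK ?gt_eqF.
have Z0 : 0 < \sum_y w y by apply: (pos_mass (F := h) w0); rewrite wh ltr01.
pose qt y := w y / \sum_y w y.
have dqt : @dist R Y qt by exact: norm_dist.
have K2 p : @dist R X p ->
    (v%:E <= eratio (\sum_x \sum_y p x * qt y * g x y) (\sum_y qt y * h y))%E.
  move=> dp; have HP := Hpos dqt hp.
  rewrite eratioE ?gt_eqF // lee_fin ler_pdivlMr // Eexp1.
  have -> : \sum_y qt y * h y = 1 / \sum_y w y.
    by rewrite /qt norm_sum wh.
  rewrite mul1r; apply: conv_ge => // x; rewrite /qt norm_sum; apply: ler_wpM2r.
    by rewrite invr_ge0 ltW.
  apply: le_trans (Hq x) _; rewrite le_eqVlt; apply/orP; left; apply/eqP; apply: eq_bigr => y _.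
  by rewrite /w /G mulrAC -mulrA.
exists v%:E; split; [|split; [|split]].
- apply: maxmin_intro.
  + move=> q _; exact: fin_is_min x0 _.
  + exists qs => // x _; rewrite F1E lee_fin; exact: Hq.
  + move=> q dq.
    have [xs Hxs] := fin_argmin x0 (fun x => \sum_y q y * G x y).
    exists xs => //; rewrite F1E lee_fin.
    apply: (@le_trans _ _ (\sum_x ps x * \sum_y q y * G x y)).
      exact: conv_ge.
    rewrite exch2; exact: conv_le.
- apply: minmax_intro.
  + move=> p _; exact: fin_is_max y0 _.
  + exists ps => // y _; rewrite F2E lee_fin; exact: Hp.
  + move=> p dp.
    have [ys Hys] := fin_argmax y0 (fun y => \sum_x p x * G x y).
    exists ys => //; rewrite F2E lee_fin.
    apply: (@le_trans _ _ (\sum_y qs y * \sum_x p x * G x y)).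
      rewrite -exch2; exact: conv_ge.
    exact: conv_le.
- apply: maxmin_intro.
  + move=> q dq; exact: inner3.
  + by exists qt.
  + by move=> q dq; exists ps => //; exact: K1.
- apply: minmax_intro.
  + move=> p _; exact: inner4.
  + by exists ps => // q dq; exact: K1.
  + by move=> p dp; exists qt => //; exact: K2.
Qed.
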